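(* If $f\in\mathcal F$ and $g\in\mathcal M_f$, then $fg\in\mathcal F$.
   Context: $\Lambda=[-\pi,\pi]$. For $h\ge0$, the geometric mean is $G(h)=\exp\{\frac1{2\pi}\int_\Lambda\ln h(\lambda)d\lambda\}$ if $\ln h\in L^1(\Lambda)$ and $G(h)=0$ otherwise. For a spectral density $f$ ($f\ge0$, $f\in L^1(\Lambda)$, positive on a set of positive measure), $\sigma_n^2(f)=\min_{c_1,\dots,c_n\in\mathbb C}\int_\Lambda|1-\sum_{k=1}^n c_ke^{-ik\lambda}|^2f(\lambda)\,d\lambda$ and $\sigma_n(f)=\sqrt{\sigma_n^2(f)}$. $\mathcal F=\{f\in L^1(\Lambda): f\ge0,\ G(f)=0,\ \lim_{n\to\infty}\sigma_{n+1}(f)/\sigma_n(f)=1\}$ (spectral densities of deterministic processes with weakly varying prediction error). For $f\in\mathcal F$, $\mathcal M_f$ is the class of functions $g\ge0$ on $\Lambda$ with $G(g)>0$, $fg\in L^1(\Lambda)$ and $\lim_{n\to\infty}\sigma_n^2(fg)/\sigma_n^2(f)=G(g)$. *)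

(* Defs.v *)
From HB Require Import structures.
From mathcomp Require Import all_boot all_order all_algebra.
From mathcomp Require Import all_classical all_reals all_analysis.
Set Implicit Arguments. Unset Strict Implicit. Unset Printing Implicit Defensive.
Import Order.TTheory GRing.Theory Num.Theory.
Import numFieldNormedType.Exports.
Local Open Scope classical_set_scope.
Local Open Scope ring_scope.

Section Spectral.
Variable R : realType.

Definition Lam : set R := `[- pi, pi]%classic.

Definition leb := (@lebesgue_measure R).

Definition L1 (h : R -> R) : Prop := leb.-integrable Lam (EFin \o h).

(* geometric mean: ln h in L^1 requires h > 0 a.e. on Lambda (otherwise
   ln h = -oo on a set of positive measure) *)
Definition lnL1 (h : R -> R) : Prop :=
  {ae leb, forall x, Lam x -> 0 < h x} /\ L1 (fun x => ln (h x)).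

Definition G (h : R -> R) : R :=
  if `[< lnL1 h >] then expR ((2 * pi)^-1 * Rintegral leb Lam (fun x => ln (h x)))
  else 0.

(* |1 - sum_{k=1}^n c_k e^{-i k x}|^2 with c_k = a_k + i b_k, written out:
   c_k e^{-ikx} = (a_k cos kx + b_k sin kx) + i (b_k cos kx - a_k sin kx). *)
Definition trig_err (n : nat) (a b : nat -> R) (x : R) : R :=
  (1 - \sum_(1 <= k < n.+1) (a k * cos (k%:R * x) + b k * sin (k%:R * x))) ^+ 2
  + (\sum_(1 <= k < n.+1) (b k * cos (k%:R * x) - a k * sin (k%:R * x))) ^+ 2.

Definition sigma2 (f : R -> R) (n : nat) : R :=
  inf [set r | exists a b : nat -> R,
         r = Rintegral leb Lam (fun x => trig_err n a b x * f x)].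

Definition sigma (f : R -> R) (n : nat) : R := Num.sqrt (sigma2 f n).

Definition spectral_density (f : R -> R) : Prop :=
  (forall x, Lam x -> 0 <= f x) /\ L1 f /\
  (0 < leb (Lam `&` [set x | (0 < f x)%R]))%E.

Definition classF (f : R -> R) : Prop :=
  spectral_density f /\ G f = 0 /\
  (fun n => sigma f n.+1 / sigma f n) @ \oo --> (1 : R).

Definition classM (f g : R -> R) : Prop :=
  (forall x, Lam x -> 0 <= g x) /\ 0 < G g /\ L1 (fun x => f x * g x) /\
  (fun n => sigma2 (fun x => f x * g x) n / sigma2 f n) @ \oo --> G g.

End Spectral.

(* Main.v *)
Require Import Defs.
From HB Require Import structures.
From mathcomp Require Import all_boot all_order all_algebra.
From mathcomp Require Import all_classical all_reals all_analysis.
Import Order.TTheory GRing.Theory Num.Theory.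
Import numFieldNormedType.Exports.
From mathcomp Require Import lra.
Local Open Scope classical_set_scope.
Local Open Scope ring_scope.

Lemma ratio_lemma (R : realType) (t s : nat -> R) (c : R) :
  (forall n, 0 <= t n) -> (forall n, 0 <= s n) -> 0 < c ->
  (fun n => Num.sqrt (t n.+1) / Num.sqrt (t n)) @ \oo --> (1 : R) ->
  (fun n => s n / t n) @ \oo --> c ->
  (fun n => Num.sqrt (s n.+1) / Num.sqrt (s n)) @ \oo --> (1 : R).
Proof.
move=> t0 s0 c0 ht hr.
have hsq : (fun n => Num.sqrt (s n / t n)) @ \oo --> Num.sqrt c.
  apply: continuous_cvg => //; exact: sqrt_continuous.
have hsq1 : (fun n => Num.sqrt (s n.+1 / t n.+1)) @ \oo --> Num.sqrt c.
  by rewrite (cvg_shiftS (fun n => Num.sqrt (s n / t n))).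
have sc0 : Num.sqrt c != 0 by rewrite sqrtr_eq0 -ltNge.
have E : \forall n \near \oo, Num.sqrt (s n.+1) / Num.sqrt (s n) =
   Num.sqrt (s n.+1 / t n.+1) * (Num.sqrt (s n / t n))^-1
     * (Num.sqrt (t n.+1) / Num.sqrt (t n)).
  have : \forall n \near \oo, 1/2 < Num.sqrt (t n.+1) / Num.sqrt (t n).
    by apply: (cvgr_gt (1:R) ht); lra.
  apply: filterS => n hn.
  have tn : Num.sqrt (t n) != 0.
    by apply/eqP => h; move: hn; rewrite h invr0 mulr0; lra.
  have tn1 : Num.sqrt (t n.+1) != 0.
    by apply/eqP => h; move: hn; rewrite h mul0r; lra.
  have key : forall m, Num.sqrt (t m) != 0 ->
      Num.sqrt (s m) = Num.sqrt (s m / t m) * Num.sqrt (t m).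
    move=> m tm; rewrite -sqrtrM ?divr_ge0 // divfK //.
    by apply: contra tm => /eqP ->; rewrite sqrtr0.
  rewrite /= (key _ tn) (key _ tn1) /=.
  by rewrite invfM !mulrA; congr (_ * _); rewrite -!mulrA; congr (_ * _); rewrite mulrC.
suff H : (fun n => Num.sqrt (s n.+1 / t n.+1) * (Num.sqrt (s n / t n))^-1
     * (Num.sqrt (t n.+1) / Num.sqrt (t n))) @ \oo --> (1:R).
  apply: cvg_trans H; apply: near_eq_cvg; apply: filterS E => n /= ->//.
have -> : (1:R) = Num.sqrt c * (Num.sqrt c)^-1 * 1 by rewrite mulr1 divff.
apply: cvgM; [apply: cvgM; [exact: hsq1 | exact: cvgV] | exact: ht].
Qed.

Lemma sigma2_ge0 (R : realType) (h : R -> R) n :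
  (forall x, Lam x -> 0 <= h x) -> 0 <= sigma2 h n.
Proof.
move=> h0; rewrite /sigma2; apply: lb_le_inf.
  by eexists; exists (fun _ => 0), (fun _ => 0).
move=> _ [a [b ->]]; apply: Rintegral_ge0 => x Lx.
by apply: mulr_ge0; [rewrite /trig_err addr_ge0 // sqr_ge0 | exact: h0].
Qed.

Lemma mLam (R : realType) : measurable (Lam (R := R)).
Proof. exact: measurable_itv. Qed.

#[local] Instance leb_filter (R : realType) :
  Filter (almost_everywhere (@leb R)) :=
  ae_filter_ringOfSetsType (@lebesgue_measure R).
#[local] Instance leb_filter' (R : realType) :
  Filter (nbhs (almost_everywhere (@leb R))) :=
  ae_filter_ringOfSetsType (@lebesgue_measure R).

Lemma integrable_ae_eq (R : realType) (D : set R) (h1 h2 : R -> R) :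
  measurable D -> (@leb R).-integrable D (EFin \o h1) ->
  measurable_fun (T := measurableTypeR R) (U := R) D h2 ->
  {ae (@leb R), forall x, D x -> h1 x = h2 x} ->
  (@leb R).-integrable D (EFin \o h2).
Proof.
move=> mD /integrableP[m1 i1] m2 ae; apply/integrableP; split.
  exact/measurable_realfun.measurable_EFinP.
apply: le_lt_trans i1; rewrite le_eqVlt; apply/orP; left; apply/eqP.
apply: ge0_ae_eq_integral => //.
- apply: (proj2 (@measurable_realfun.measurable_EFinP _ (measurableTypeR R) R D (fun x => `|h2 x|))).
  exact: (measurableT_comp (@measurable_realfun.normr_measurable R setT) m2).
- move/measurable_realfun.measurable_EFinP : m1 => m1.
  apply: (proj2 (@measurable_realfun.measurable_EFinP _ (measurableTypeR R) R D (fun x => `|h1 x|))).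
  exact: (measurableT_comp (@measurable_realfun.normr_measurable R setT) m1).
- apply: filterS ae => x h Dx /=; by rewrite (h Dx).
Qed.

Lemma mfun_of_L1 (R : realType) (h : R -> R) : L1 h -> measurable_fun (@Lam R) h.
Proof. by move=> /integrableP[+ _] => /measurable_realfun.measurable_EFinP. Qed.

Theorem mainTheorem8 (R : realType) (f g : R -> R) :
  classF f -> classM f g -> classF (fun x => (f x * g x)%R).
Proof.
move=> [[f0 [f1 fpos]] [Gf0 cvf]] [g0 [Gg [fg1 cvr]]].
have [aeg lng] : lnL1 g.
  move: Gg; rewrite /G; case: asboolP => [h _|_]; [exact: h | by rewrite ltxx].
have nf : ~ lnL1 f.
  move=> hf; move: Gf0; rewrite /G asboolT //; apply/eqP.
  by rewrite gt_eqF // expR_gt0.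
split; [split; [|split] | split].
- by move=> x Lx; apply: mulr_ge0; [exact: f0 | exact: g0].
- exact: fg1.
- have [N [mN N0 sN]] := aeg.
  have mf := @mfun_of_L1 R f f1.
  have mfg := @mfun_of_L1 R _ fg1.
  have mA : @measurable _ (measurableTypeR R) (@Lam R `&` [set x | 0 < f x]).
    rewrite (_ : [set x | 0 < f x] = f @^-1` `]0, +oo[%classic).
      exact: mf (mLam R) _ (measurable_itv _).
    by apply/seteqP; split=> x /=; rewrite in_itv /= andbT.
  have mB : @measurable _ (measurableTypeR R) (@Lam R `&` [set x | 0 < f x * g x]).
    rewrite (_ : [set x | 0 < f x * g x] = (fun x => f x * g x) @^-1` `]0, +oo[%classic).
      exact: mfg (mLam R) _ (measurable_itv _).
    by apply/seteqP; split=> x /=; rewrite in_itv /= andbT.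
  have sub : @Lam R `&` [set x | 0 < f x] `<=`
      (@Lam R `&` [set x | 0 < f x * g x]) `|` N.
    move=> x [Lx fx]; have [xN|xN] := pselect (N x); [by right | left].
    split=> //=; apply: mulr_gt0 => //.
    apply: contrapT => h; apply: xN; apply: sN => /= hg; apply: h; exact: hg.
  apply: (lt_le_trans fpos).
  have := le_measure (@lebesgue_measure R) (mem_set mA) (mem_set (measurableU _ _ mB mN)) sub.
  move=> h; apply: (le_trans h).
  rewrite le_eqVlt; apply/orP; left; apply/eqP.
  exact: (measureU0 mB mN N0).
- rewrite /G; case: asboolP => // -[aefg lnfg]; exfalso; apply: nf; split.
    apply: filterS2 aefg aeg => x h1 h2 Lx.
    have := h1 Lx; rewrite lt0r mulf_eq0 negb_or => /andP[/andP[fx _] _].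
    by rewrite lt0r fx f0.
  apply: (@integrable_ae_eq R (@Lam R) (fun x => ln (f x * g x) - ln (g x))).
  + exact: mLam.
  + have := integrableB _ lnfg lng; apply; exact: (mLam R).
  + apply: measurableT_comp; first exact: measurable_realfun.measurable_ln.
    exact: mfun_of_L1.
  + apply: filterS2 aefg aeg => x h1 h2 Lx.
    have gx := h2 Lx; have fgx := h1 Lx.
    have fx : 0 < f x by rewrite -(mulfK (lt0r_neq0 gx) (f x)) divr_gt0.
    by rewrite lnM ?posrE // addrK.
- apply: (@ratio_lemma R (sigma2 f) (sigma2 (fun x => f x * g x)) (G g)) => //.
  + by move=> n; apply: sigma2_ge0.
  + by move=> n; apply: sigma2_ge0 => x Lx; apply: mulr_ge0; [exact: f0 | exact: g0].
Qed.
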